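(* Let $\alpha\in(0,1]$ and $\lambda\in\mathbb{C}$ with $\operatorname{Re}\lambda>-1$ and $\lambda\notin\{0,1\}$. Then there is no nontrivial $\psi\in C^\infty[0,1]$ solving \[ z(1-z)\psi''(z)+\big(\lambda-\sqrt{1-\alpha}-2\lambda z\big)\psi'(z)-\lambda(\lambda-1)\psi(z)=0 . \] In particular, $U_{\alpha,\infty,\kappa}$ is mode-stable: every $\lambda\in\mathbb{C}$ for which there exists $0\ne\phi\in C^\infty[-1,1]$ with \[ \Big(\lambda^2+\lambda-\frac{2\alpha\lambda}{1+\sqrt{1-\alpha}\,y}\Big)\phi+\Big(2\lambda+2-\frac{2\alpha}{1+\sqrt{1-\alpha}\,y}\Big)y\,\phi'+(y^2-1)\phi''=0 \] satisfies either $\operatorname{Re}\lambda<0$ or $\lambda\in\{0,1\}$.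
   Context: The hypergeometric ODE is obtained from $(y^2-1)\phi''+(2\lambda y+2\sqrt{1-\alpha})\phi'+(\lambda^2-\lambda)\phi=0$ on $[-1,1]$ via $y=2z-1$, $\phi(y)=\psi(z)$. $U_{\alpha,\infty,\kappa}(s,y)=\alpha s-\alpha\ln(1+\sqrt{1-\alpha}y)+\kappa$; its linearised operator's eigenvalues are the $\lambda$ for which the second displayed ODE has a nonzero smooth solution on $[-1,1]$, and mode-stability means each such eigenvalue has negative real part or equals $0$ or $1$. *)

(* Defs.v *)
From Stdlib Require Export Reals.
From Coquelicot Require Export Coquelicot.

Definition has_deriv_on (a b : R) (f g : R -> C) : Prop :=
  forall x : R, (a <= x <= b)%R ->
    filterdiff f (within (fun t : R => (a <= t <= b)%R) (locally x))
      (fun h : R => scal h (g x)).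

Definition smooth_on (a b : R) (f : R -> C) : Prop :=
  exists D : nat -> R -> C,
    D O = f /\ forall n : nat, has_deriv_on a b (D n) (D (S n)).

(* Main.v *)
Require Import Defs.
From Stdlib Require Import Reals Lra Psatz ZArith.
From Coquelicot Require Import Coquelicot.
Open Scope R_scope.

Lemma nat_large (r : R) : exists N : nat, r <= INR N.
Proof.
  destruct (archimed r) as [H1 _].
  destruct (Z_le_gt_dec 0 (up r)) as [Hz|Hz].
  - exists (Z.to_nat (up r)). rewrite INR_IZR_INZ, Z2Nat.id by lia. lra.
  - exists O. simpl. assert (Hz2 : (up r < 0)%Z) by lia. apply IZR_lt in Hz2. lra.
Qed.

Lemma isd_plus (f g : R -> R) (x a b : R) : is_derive f x a -> is_derive g x b -> is_derive (fun t => f t + g t) x (a + b).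
Proof. intros. exact (is_derive_plus f g x a b H H0). Qed.
Lemma isd_minus (f g : R -> R) (x a b : R) : is_derive f x a -> is_derive g x b -> is_derive (fun t => f t - g t) x (a - b).
Proof. intros. exact (is_derive_minus f g x a b H H0). Qed.
Lemma isd_mult (f g : R -> R) (x a b : R) : is_derive f x a -> is_derive g x b -> is_derive (fun t => f t * g t) x (a * g x + f x * b).
Proof. intros. exact (is_derive_mult f g x a b H H0 Rmult_comm). Qed.
Lemma isd_comp (f g : R -> R) (x a b : R) : is_derive f (g x) a -> is_derive g x b -> is_derive (fun t => f (g t)) x (b * a).
Proof. intros. exact (is_derive_comp f g x a b H H0). Qed.
Lemma isd_eq (f : R -> R) (x a b : R) : is_derive f x a -> a = b -> is_derive f x b.
Proof. intros H ->; exact H. Qed.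
Lemma isd_ext (f g : R -> R) (x a : R) : (forall t, f t = g t) -> is_derive f x a -> is_derive g x a.
Proof. intros. apply (is_derive_ext f g x a H H0). Qed.
Lemma isd_const (c x : R) : is_derive (fun _ => c) x 0.
Proof. apply (is_derive_const c x). Qed.
Lemma isd_id (x : R) : is_derive (fun t => t) x 1.
Proof. apply (is_derive_id x). Qed.

Lemma isd_unique (f : R -> R) (x a b : R) : is_derive f x a -> is_derive f x b -> a = b.
Proof. intros H1 H2. apply is_derive_unique in H1. apply is_derive_unique in H2. congruence. Qed.

Definition cderiv (f : R -> C) (x : R) (l : C) : Prop :=
  is_derive (fun t => Re (f t)) x (Re l) /\ is_derive (fun t => Im (f t)) x (Im l).

Lemma C_ext (u v : C) : Re u = Re v -> Im u = Im v -> u = v.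
Proof. destruct u, v; simpl; intros; subst; reflexivity. Qed.

Lemma hd_interior a b f g x : has_deriv_on a b f g -> a < x < b -> is_derive f x (g x).
Proof.
  intros H Hx. destruct (H x ltac:(lra)) as [Hlin Hd]. split; [exact Hlin|].
  intros x' Hx'.
  pose proof (is_filter_lim_locally_unique x x' Hx') as E. subst x'.
  assert (Hlim : is_filter_lim (within (fun t : R => a <= t <= b) (locally x)) x).
  { intros P HP. unfold within. apply filter_imp with (2 := HP). auto. }
  intros eps. specialize (Hd x Hlim eps). unfold within in Hd.
  assert (HD : locally x (fun t : R => a <= t <= b)).
  { assert (Hp : 0 < Rmin (x - a) (b - x)) by (apply Rmin_glb_lt; lra).
    exists (mkposreal _ Hp). intros y Hy. simpl in Hy.
    change (Rabs (y - x) < Rmin (x - a) (b - x)) in Hy.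
    apply Rabs_def2 in Hy. destruct Hy as [Hy1 Hy2].
    pose proof (Rmin_l (x - a) (b - x)). pose proof (Rmin_r (x - a) (b - x)). lra. }
  generalize (filter_and _ _ Hd HD). apply filter_imp. intros y [H1 H2]. auto.
Qed.

Lemma isd_fst (f : R -> C) x l : is_derive f x l -> is_derive (fun t => Re (f t)) x (Re l).
Proof.
  intros H. unfold is_derive. eapply filterdiff_ext_lin.
  - apply (filterdiff_comp f (fun t : C => fst t) _ (fun t => fst t) H).
    apply filterdiff_linear. apply is_linear_fst.
  - intros y. reflexivity.
Qed.
Lemma isd_snd (f : R -> C) x l : is_derive f x l -> is_derive (fun t => Im (f t)) x (Im l).
Proof.
  intros H. unfold is_derive. eapply filterdiff_ext_lin.
  - apply (filterdiff_comp f (fun t : C => snd t) _ (fun t => snd t) H).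
    apply filterdiff_linear. apply is_linear_snd.
  - intros y. reflexivity.
Qed.

Lemma cd_interior a b f g x : has_deriv_on a b f g -> a < x < b -> cderiv f x (g x).
Proof.
  intros H Hx. pose proof (hd_interior a b f g x H Hx). split.
  apply isd_fst; auto. apply isd_snd; auto.
Qed.

Lemma hd_cont a b f g x : has_deriv_on a b f g -> a <= x <= b ->
  forall eps, 0 < eps -> exists del, 0 < del /\ forall y, a <= y <= b -> Rabs (y - x) < del ->
    Rabs (Re (f y) - Re (f x)) < eps /\ Rabs (Im (f y) - Im (f x)) < eps.
Proof.
  intros H Hx eps Heps.
  assert (Hlim : is_filter_lim (within (fun t : R => a <= t <= b) (locally x)) x).
  { intros P HP. unfold within. apply filter_imp with (2 := HP). auto. }
  assert (Hex : ex_filterdiff f (within (fun t : R => a <= t <= b) (locally x))).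
  { exists (fun h : R => scal h (g x)). apply H. exact Hx. }
  pose proof (filterdiff_continuous_aux f Hex x Hlim) as Hc.
  apply filterlim_locally with (eps := mkposreal eps Heps) in Hc.
  unfold within in Hc. destruct Hc as [del Hdel].
  exists del. split. apply cond_pos. intros y Hy Hyx.
  specialize (Hdel y Hyx Hy). destruct Hdel as [H1 H2].
  split; [exact H1 | exact H2].
Qed.

Definition clamp a b x := Rmax a (Rmin b x).
Lemma clamp_in a b x : a <= b -> a <= clamp a b x <= b.
Proof. intros. unfold clamp, Rmax, Rmin. repeat destruct Rle_dec; lra. Qed.
Lemma clamp_id a b x : a <= x <= b -> clamp a b x = x.
Proof. intros. unfold clamp, Rmax, Rmin. repeat destruct Rle_dec; lra. Qed.
Lemma clamp_lip a b x y : a <= b -> Rabs (clamp a b y - clamp a b x) <= Rabs (y - x).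
Proof. intros. unfold clamp, Rmax, Rmin. repeat destruct Rle_dec; unfold Rabs; repeat destruct Rcase_abs; lra. Qed.

Lemma bnd_real (F : R -> R) a b : a <= b ->
  (forall x, a <= x <= b -> forall eps, 0 < eps -> exists del, 0 < del /\
     forall y, a <= y <= b -> Rabs (y - x) < del -> Rabs (F y - F x) < eps) ->
  exists M, forall x, a <= x <= b -> Rabs (F x) <= M.
Proof.
  intros Hab Hc.
  set (G := fun x => F (clamp a b x)).
  assert (HG : forall c, a <= c <= b -> continuity_pt G c).
  { intros c Hcin. unfold continuity_pt, continue_in, limit1_in, limit_in.
    intros eps Heps. destruct (Hc c Hcin eps Heps) as [del [Hdel Hd]].
    exists del. split; auto. intros y [_ Hy]. simpl in Hy. unfold R_dist in Hy.
    simpl. unfold R_dist. unfold G. rewrite (clamp_id a b c Hcin).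
    apply Hd. apply clamp_in; auto.
    pose proof (clamp_lip a b c y Hab). rewrite (clamp_id a b c Hcin) in H. lra. }
  destruct (continuity_ab_maj G a b Hab HG) as [M1 [HM1 _]].
  assert (HG' : forall c, a <= c <= b -> continuity_pt (fun x => - G x) c).
  { intros c Hcin. apply continuity_pt_opp. auto. }
  destruct (continuity_ab_maj (fun x => - G x) a b Hab HG') as [M2 [HM2 _]].
  exists (Rmax (G M1) (- G M2)). intros x Hx.
  specialize (HM1 x Hx). specialize (HM2 x Hx). unfold G in *.
  rewrite (clamp_id a b x Hx) in HM1, HM2.
  unfold Rabs; destruct Rcase_abs.
  - pose proof (Rmax_r (F (clamp a b M1)) (- F (clamp a b M2))). lra.
  - pose proof (Rmax_l (F (clamp a b M1)) (- F (clamp a b M2))). lra.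
Qed.

Lemma hd_bounded a b f g : a <= b -> has_deriv_on a b f g ->
  exists M, forall x, a <= x <= b -> Rabs (Re (f x)) <= M /\ Rabs (Im (f x)) <= M.
Proof.
  intros Hab H.
  destruct (bnd_real (fun x => Re (f x)) a b Hab) as [M1 HM1].
  { intros x Hx eps Heps. destruct (hd_cont a b f g x H Hx eps Heps) as [d [Hd Hd']].
    exists d; split; auto. intros y Hy Hyx. apply (Hd' y Hy Hyx). }
  destruct (bnd_real (fun x => Im (f x)) a b Hab) as [M2 HM2].
  { intros x Hx eps Heps. destruct (hd_cont a b f g x H Hx eps Heps) as [d [Hd Hd']].
    exists d; split; auto. intros y Hy Hyx. apply (Hd' y Hy Hyx). }
  exists (Rmax M1 M2). intros x Hx. split.
  - pose proof (Rmax_l M1 M2). specialize (HM1 x Hx). lra.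
  - pose proof (Rmax_r M1 M2). specialize (HM2 x Hx). lra.
Qed.

Lemma hd_zero_closed a b f g : a < b -> has_deriv_on a b f g ->
  (forall t, a < t < b -> f t = RtoC 0) -> forall x, a <= x <= b -> f x = RtoC 0.
Proof.
  intros Hab H Hz x Hx.
  destruct (Req_dec x a) as [Ea|Na]; [| destruct (Req_dec x b) as [Eb|Nb]];
    [| | apply Hz; lra].
  - subst x.
    apply C_ext; simpl.
    + destruct (Req_dec (Re (f a)) 0) as [E|NE]; auto.
      assert (Hp : 0 < Rabs (Re (f a))) by (apply Rabs_pos_lt; auto).
      destruct (hd_cont a b f g a H Hx _ Hp) as [d [Hd Hd']].
      set (y := a + Rmin (d/2) ((b-a)/2)).
      assert (Hy1 : 0 < Rmin (d/2) ((b-a)/2)) by (apply Rmin_glb_lt; lra).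
      pose proof (Rmin_l (d/2) ((b-a)/2)). pose proof (Rmin_r (d/2) ((b-a)/2)).
      assert (Hyin : a < y < b) by (unfold y; lra).
      destruct (Hd' y ltac:(lra)) as [Hq _].
      { unfold y. rewrite Rabs_right; lra. }
      rewrite (Hz y Hyin) in Hq. simpl in Hq. rewrite Rminus_0_l, Rabs_Ropp in Hq. lra.
    + destruct (Req_dec (Im (f a)) 0) as [E|NE]; auto.
      assert (Hp : 0 < Rabs (Im (f a))) by (apply Rabs_pos_lt; auto).
      destruct (hd_cont a b f g a H Hx _ Hp) as [d [Hd Hd']].
      set (y := a + Rmin (d/2) ((b-a)/2)).
      assert (Hy1 : 0 < Rmin (d/2) ((b-a)/2)) by (apply Rmin_glb_lt; lra).
      pose proof (Rmin_l (d/2) ((b-a)/2)). pose proof (Rmin_r (d/2) ((b-a)/2)).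
      assert (Hyin : a < y < b) by (unfold y; lra).
      destruct (Hd' y ltac:(lra)) as [_ Hq].
      { unfold y. rewrite Rabs_right; lra. }
      rewrite (Hz y Hyin) in Hq. simpl in Hq. rewrite Rminus_0_l, Rabs_Ropp in Hq. lra.
  - subst x.
    apply C_ext; simpl.
    + destruct (Req_dec (Re (f b)) 0) as [E|NE]; auto.
      assert (Hp : 0 < Rabs (Re (f b))) by (apply Rabs_pos_lt; auto).
      destruct (hd_cont a b f g b H Hx _ Hp) as [d [Hd Hd']].
      set (y := b - Rmin (d/2) ((b-a)/2)).
      assert (Hy1 : 0 < Rmin (d/2) ((b-a)/2)) by (apply Rmin_glb_lt; lra).
      pose proof (Rmin_l (d/2) ((b-a)/2)). pose proof (Rmin_r (d/2) ((b-a)/2)).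
      assert (Hyin : a < y < b) by (unfold y; lra).
      destruct (Hd' y ltac:(lra)) as [Hq _].
      { unfold y. rewrite Rabs_left; lra. }
      rewrite (Hz y Hyin) in Hq. simpl in Hq. rewrite Rminus_0_l, Rabs_Ropp in Hq. lra.
    + destruct (Req_dec (Im (f b)) 0) as [E|NE]; auto.
      assert (Hp : 0 < Rabs (Im (f b))) by (apply Rabs_pos_lt; auto).
      destruct (hd_cont a b f g b H Hx _ Hp) as [d [Hd Hd']].
      set (y := b - Rmin (d/2) ((b-a)/2)).
      assert (Hy1 : 0 < Rmin (d/2) ((b-a)/2)) by (apply Rmin_glb_lt; lra).
      pose proof (Rmin_l (d/2) ((b-a)/2)). pose proof (Rmin_r (d/2) ((b-a)/2)).
      assert (Hyin : a < y < b) by (unfold y; lra).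
      destruct (Hd' y ltac:(lra)) as [_ Hq].
      { unfold y. rewrite Rabs_left; lra. }
      rewrite (Hz y Hyin) in Hq. simpl in Hq. rewrite Rminus_0_l, Rabs_Ropp in Hq. lra.
Qed.

Lemma cderiv_eq f x a b : cderiv f x a -> a = b -> cderiv f x b.
Proof. intros H ->; exact H. Qed.

Lemma cderiv_ext (f g : R -> C) x a : (forall t, f t = g t) -> cderiv f x a -> cderiv g x a.
Proof.
  intros E [H1 H2]. split.
  - apply isd_ext with (2 := H1). intros t; rewrite E; reflexivity.
  - apply isd_ext with (2 := H2). intros t; rewrite E; reflexivity.
Qed.

Lemma cderiv_plus (f g : R -> C) x a b : cderiv f x a -> cderiv g x b ->
  cderiv (fun t => (f t + g t)%C) x (a + b)%C.
Proof.
  intros [Hf1 Hf2] [Hg1 Hg2]. split.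
  - apply isd_ext with (fun t => Re (f t) + Re (g t)). intros; reflexivity.
    apply isd_plus; auto.
  - apply isd_ext with (fun t => Im (f t) + Im (g t)). intros; reflexivity.
    apply isd_plus; auto.
Qed.

Lemma cderiv_minus (f g : R -> C) x a b : cderiv f x a -> cderiv g x b ->
  cderiv (fun t => (f t - g t)%C) x (a - b)%C.
Proof.
  intros [Hf1 Hf2] [Hg1 Hg2]. split.
  - apply isd_ext with (fun t => Re (f t) - Re (g t)). intros; simpl; unfold Re, Im; ring.
    apply isd_eq with (Re a - Re b). apply isd_minus; auto. simpl; unfold Re, Im; ring.
  - apply isd_ext with (fun t => Im (f t) - Im (g t)). intros; simpl; unfold Re, Im; ring.
    apply isd_eq with (Im a - Im b). apply isd_minus; auto. simpl; unfold Re, Im; ring.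
Qed.

Lemma cderiv_mult (f g : R -> C) x a b : cderiv f x a -> cderiv g x b ->
  cderiv (fun t => (f t * g t)%C) x (a * g x + f x * b)%C.
Proof.
  intros [Hf1 Hf2] [Hg1 Hg2]. split.
  - apply isd_ext with (fun t => Re (f t) * Re (g t) - Im (f t) * Im (g t)). intros; simpl; unfold Re, Im; ring.
    eapply isd_eq. apply isd_minus; apply isd_mult; eauto. simpl; unfold Re, Im; ring.
  - apply isd_ext with (fun t => Re (f t) * Im (g t) + Im (f t) * Re (g t)). intros; simpl; unfold Re, Im; ring.
    eapply isd_eq. apply isd_plus; apply isd_mult; eauto. simpl; unfold Re, Im; ring.
Qed.

Lemma cderiv_const (c : C) x : cderiv (fun _ => c) x (RtoC 0).
Proof. split; (apply isd_eq with 0; [apply isd_const | reflexivity]). Qed.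

Lemma cderiv_R (r : R -> R) x dr : is_derive r x dr -> cderiv (fun t => RtoC (r t)) x (RtoC dr).
Proof. intros H. split. exact H. apply isd_ext with (fun _ => 0). intros; reflexivity. apply isd_eq with 0. apply isd_const. reflexivity. Qed.

Lemma cderiv_comp (f : R -> C) (h : R -> R) x l dh :
  cderiv f (h x) l -> is_derive h x dh -> cderiv (fun t => f (h t)) x (RtoC dh * l)%C.
Proof.
  intros [H1 H2] Hh. split.
  - eapply isd_eq. apply (isd_comp (fun t => Re (f t)) h x _ _ H1 Hh). simpl; unfold Re, Im; ring.
  - eapply isd_eq. apply (isd_comp (fun t => Im (f t)) h x _ _ H2 Hh). simpl; unfold Re, Im; ring.
Qed.

Lemma locally_int a b x : a < x < b -> locally x (fun t : R => a < t < b).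
Proof.
  intros Hx. assert (Hp : 0 < Rmin (x - a) (b - x)) by (apply Rmin_glb_lt; lra).
  exists (mkposreal _ Hp). intros y Hy. simpl in Hy.
  change (Rabs (y - x) < Rmin (x - a) (b - x)) in Hy.
  apply Rabs_def2 in Hy. destruct Hy as [Hy1 Hy2].
  pose proof (Rmin_l (x - a) (b - x)). pose proof (Rmin_r (x - a) (b - x)). lra.
Qed.

Lemma cderiv_unique_loc a b (f g : R -> C) x l1 l2 :
  (forall t, a < t < b -> f t = g t) -> a < x < b ->
  cderiv f x l1 -> cderiv g x l2 -> l1 = l2.
Proof.
  intros E Hx [H1 H2] [G1 G2].
  assert (HL : locally x (fun t => f t = g t)).
  { apply filter_imp with (2 := locally_int a b x Hx). auto. }
  apply C_ext.
  - apply (isd_unique (fun t => Re (g t)) x); auto.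
    apply (is_derive_ext_loc (fun t => Re (f t))); auto.
    apply filter_imp with (2 := HL). intros t ->; reflexivity.
  - apply (isd_unique (fun t => Im (g t)) x); auto.
    apply (is_derive_ext_loc (fun t => Im (f t))); auto.
    apply filter_imp with (2 := HL). intros t ->; reflexivity.
Qed.

Lemma cderiv_zero_loc a b (f : R -> C) x l :
  (forall t, a < t < b -> f t = RtoC 0) -> a < x < b -> cderiv f x l -> l = RtoC 0.
Proof.
  intros E Hx H. apply (cderiv_unique_loc a b f (fun _ => RtoC 0) x); auto.
  apply cderiv_const.
Qed.

Lemma maxprinc (v v1 v2 : R -> R) a b c : a < c < b ->
  (forall x, a < x < b -> is_derive v x (v1 x)) ->
  (forall x, a < x < b -> is_derive v1 x (v2 x)) ->
  (forall x, a < x < b -> v x <= v c) -> v1 c = 0 /\ v2 c <= 0.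
Proof.
  intros Hc Hv Hv1 Hmax.
  assert (Hl : derivable_pt_lim v c (v1 c)) by (apply is_derive_Reals; apply Hv; lra).
  assert (E1 : v1 c = 0).
  { pose (pr := exist _ (v1 c) Hl : derivable_pt v c).
    pose proof (deriv_maximum v a b c pr ltac:(lra) ltac:(lra) ltac:(intros; apply Hmax; lra)) as Hd.
    exact Hd. }
  split; [exact E1|].
  destruct (Rle_lt_dec (v2 c) 0) as [Hle|Hgt]; [exact Hle|exfalso].
  assert (Hl2 : derivable_pt_lim v1 c (v2 c)) by (apply is_derive_Reals; apply Hv1; lra).
  destruct (Hl2 (v2 c / 2) ltac:(lra)) as [del Hdel].
  set (h0 := Rmin del (b - c) / 2).
  assert (Hm : 0 < Rmin del (b - c)) by (apply Rmin_glb_lt; [apply cond_pos|lra]).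
  pose proof (Rmin_l del (b - c)). pose proof (Rmin_r del (b - c)).
  assert (Hh0 : 0 < h0) by (unfold h0; lra).
  destruct (MVT_cor2 v v1 c (c + h0)) as [xi [Hxi Hxi2]]; [lra| |].
  { intros x Hx. apply is_derive_Reals. apply Hv. unfold h0 in Hx. lra. }
  assert (Hh : xi - c <> 0) by lra.
  assert (Hhd : Rabs (xi - c) < del) by (rewrite Rabs_right; unfold h0 in Hxi2; lra).
  specialize (Hdel (xi - c) Hh Hhd).
  replace (c + (xi - c)) with xi in Hdel by ring.
  rewrite E1, Rminus_0_r in Hdel.
  apply Rabs_def2 in Hdel. destruct Hdel as [Hd1 Hd2].
  assert (Hpos : 0 < v1 xi / (xi - c)) by lra.
  assert (Hv1p : 0 < v1 xi).
  { replace (v1 xi) with (v1 xi / (xi - c) * (xi - c)) by (field; lra).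
    apply Rmult_lt_0_compat; lra. }
  assert (Hvm : v (c + h0) <= v c) by (apply Hmax; unfold h0; lra).
  assert (0 < v1 xi * (c + h0 - c)) by (apply Rmult_lt_0_compat; lra).
  lra.
Qed.

Definition odeq (s : R) (mu : C) (x : R) (c0 c1 c2 : C) : Prop :=
  (RtoC (x*(1-x)) * c2 + (mu * RtoC (1 - 2*x) - RtoC s) * c1 - mu * (mu - RtoC 1) * c0 = RtoC 0)%C.

Lemma ode_step s mu (f0 f1 f2 f3 : R -> C) x :
  0 < x < 1 -> (forall t, 0 < t < 1 -> odeq s mu t (f0 t) (f1 t) (f2 t)) ->
  (forall t, 0 < t < 1 -> cderiv f0 t (f1 t)) ->
  (forall t, 0 < t < 1 -> cderiv f1 t (f2 t)) ->
  cderiv f2 x (f3 x) ->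
  odeq s (mu + RtoC 1) x (f1 x) (f2 x) (f3 x).
Proof.
  intros Hx Ho H0 H1 H2.
  assert (dZ : cderiv (fun t => RtoC (t * (1 - t))) x (RtoC (1 - 2 * x))).
  { apply cderiv_R. eapply isd_eq. apply isd_mult. apply isd_id. apply isd_minus. apply isd_const. apply isd_id. simpl. ring. }
  assert (db : cderiv (fun t => (mu * RtoC (1 - 2 * t) - RtoC s)%C) x (mu * RtoC (-2))%C).
  { eapply cderiv_eq. apply cderiv_minus. apply cderiv_mult. apply cderiv_const. apply cderiv_R.
    eapply isd_eq. apply isd_minus. apply isd_const. apply isd_mult. apply isd_const. apply isd_id.
    reflexivity. apply cderiv_const. apply C_ext; simpl; unfold Re, Im; simpl; ring. }
  pose proof (cderiv_mult _ _ x _ _ dZ H2) as T1.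
  pose proof (cderiv_mult _ _ x _ _ db (H1 x Hx)) as T2.
  pose proof (cderiv_mult _ _ x _ _ (cderiv_const (mu * (mu - RtoC 1))%C x) (H0 x Hx)) as T3.
  pose proof (cderiv_minus _ _ x _ _ (cderiv_plus _ _ x _ _ T1 T2) T3) as T.
  pose proof (cderiv_zero_loc 0 1 _ x _ Ho Hx T) as Z.
  unfold odeq. rewrite <- Z. 
  replace (RtoC (-2)) with (- RtoC 2)%C by (apply C_ext; simpl; unfold Re, Im; simpl; ring).
  ring.
Qed.

Lemma odeq_parts s mu x c0 c1 c2 : odeq s mu x c0 c1 c2 ->
  x*(1-x)*Re c2 + (Re mu*(1-2*x) - s)*Re c1 - Im mu*(1-2*x)*Im c1
    - ((Re mu*Re mu - Re mu - Im mu*Im mu)*Re c0 - (2*Re mu*Im mu - Im mu)*Im c0) = 0 /\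
  x*(1-x)*Im c2 + (Re mu*(1-2*x) - s)*Im c1 + Im mu*(1-2*x)*Re c1
    - ((Re mu*Re mu - Re mu - Im mu*Im mu)*Im c0 + (2*Re mu*Im mu - Im mu)*Re c0) = 0.
Proof.
  intros H. unfold odeq in H. destruct mu as [m t], c0, c1, c2.
  pose proof (f_equal fst H) as H1. pose proof (f_equal snd H) as H2.
  simpl in H1, H2. unfold Re, Im; simpl. split; nra.
Qed.

Lemma final_ineq (m tau s c P Q W V R2 : R) :
  0 <= s <= 1 -> tau^2 + 3 <= m -> 0 < c < 1 -> 0 < P ->
  (1 - 2*c) * P + 2 * (c*(1-c)) * Q = 0 ->
  -2 * P + 4 * (1-2*c) * Q + 2 * (c*(1-c)) * (V + R2) <= 0 ->
  P * V = Q^2 + W^2 ->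
  c*(1-c) * R2 + (m*(1-2*c) - s) * Q - tau*(1-2*c)*W = (m*m - m - tau*tau) * P ->
  False.
Proof.
  intros Hs Hm Hc HP F1 F2 F3 F4.
  set (t := 1 - 2*c) in *. set (Z := c*(1-c)) in *.
  set (ReE := m*m - m - tau*tau) in *.
  set (K := 4*Z*(ReE - 1) - 3*t^2 + 2*t*(m*t - s) - tau^2*t^2).
  assert (E : 2*Z*P*(-2*P+4*t*Q+2*Z*(V+R2)) - (K*P^2 + (2*Z*W+tau*t*P)^2) =
     4*Z*P*(Z*R2 + (m*t-s)*Q - tau*t*W - ReE*P) + 4*Z^2*(P*V - (Q^2 + W^2))
     + (4*t*P + (2*Z*Q - t*P) - 2*(m*t-s)*P)*(t*P + 2*Z*Q)) by (unfold K; ring).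
  assert (HZ : 0 < Z) by (unfold Z; nra).
  assert (Hl : 2*Z*P*(-2*P+4*t*Q+2*Z*(V+R2)) <= 0).
  { assert (0 <= 2*Z*P) by nra. nra. }
  rewrite F3, F1 in E.
  assert (E0 : Z*R2 + (m*t-s)*Q - tau*t*W - ReE*P = 0) by lra.
  rewrite E0 in E.
  assert (HK : K * P^2 <= 0).
  { assert (0 <= (2*Z*W+tau*t*P)^2) by apply pow2_ge_0. nra. }
  assert (HK2 : K <= 0).
  { destruct (Rle_lt_dec K 0); auto. assert (0 < K * P^2) by (apply Rmult_lt_0_compat; nra). lra. }
  assert (H4Z : 4*Z = 1 - t^2) by (unfold Z, t; ring).
  assert (Ht : -1 < t < 1) by (unfold t; lra).
  assert (A1 : ReE - 1 >= 5) by (unfold ReE; nra).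
  assert (A2 : t^2*(2*m-3-tau^2) >= 3*t^2) by nra.
  assert (A3 : s*t <= 1) by nra.
  assert (A4 : 4*Z*(ReE-1) >= 5*(1-t^2)) by nra.
  unfold K in HK2. nra.
Qed.

Lemma maxstep s mu (f0 f1 f2 : R -> C) :
  0 <= s <= 1 -> (Im mu)^2 + 3 <= Re mu ->
  (forall x, 0 < x < 1 -> cderiv f0 x (f1 x)) ->
  (forall x, 0 < x < 1 -> cderiv f1 x (f2 x)) ->
  (exists M, forall x, 0 < x < 1 -> Rabs (Re (f0 x)) <= M /\ Rabs (Im (f0 x)) <= M) ->
  (forall x, 0 < x < 1 -> odeq s mu x (f0 x) (f1 x) (f2 x)) ->
  forall x, 0 < x < 1 -> f0 x = RtoC 0.
Proof.
  intros Hs Hmu Hd0 Hd1 [M HM] Ho x1 Hx1.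
  destruct (Req_dec (Re (f0 x1) * Re (f0 x1) + Im (f0 x1) * Im (f0 x1)) 0) as [Ez|Nz].
  { apply C_ext; simpl; nra. }
  exfalso.
  set (p := fun t => Re (f0 t)). set (q := fun t => Im (f0 t)).
  set (p1 := fun t => Re (f1 t)). set (q1 := fun t => Im (f1 t)).
  set (p2 := fun t => Re (f2 t)). set (q2 := fun t => Im (f2 t)).
  set (v := fun t => t*(1-t)*(p t * p t + q t * q t)).
  set (v1 := fun t => (1-2*t)*(p t * p t + q t * q t) + 2*(t*(1-t))*(p t * p1 t + q t * q1 t)).
  set (v2 := fun t => -2*(p t * p t + q t * q t) + 4*(1-2*t)*(p t * p1 t + q t * q1 t)
                + 2*(t*(1-t))*((p1 t * p1 t + q1 t * q1 t) + (p t * p2 t + q t * q2 t))).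
  assert (Dp : forall t, 0 < t < 1 -> is_derive p t (p1 t)) by (intros t Ht; apply (Hd0 t Ht)).
  assert (Dq : forall t, 0 < t < 1 -> is_derive q t (q1 t)) by (intros t Ht; apply (Hd0 t Ht)).
  assert (Dp1 : forall t, 0 < t < 1 -> is_derive p1 t (p2 t)) by (intros t Ht; apply (Hd1 t Ht)).
  assert (Dq1 : forall t, 0 < t < 1 -> is_derive q1 t (q2 t)) by (intros t Ht; apply (Hd1 t Ht)).
  assert (DZ : forall t, is_derive (fun t => t*(1-t)) t (1-2*t)).
  { intros t. eapply isd_eq. apply isd_mult. apply isd_id. apply isd_minus. apply isd_const. apply isd_id. simpl; ring. }
  assert (Dv : forall t, 0 < t < 1 -> is_derive v t (v1 t)).
  { intros t Ht. unfold v, v1. eapply isd_eq. apply isd_mult. apply DZ.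
    apply isd_plus; apply isd_mult; auto. simpl; ring. }
  assert (Dv1 : forall t, 0 < t < 1 -> is_derive v1 t (v2 t)).
  { intros t Ht. unfold v1, v2. eapply isd_eq. apply isd_plus. apply isd_mult.
    apply isd_minus. apply isd_const. apply isd_mult. apply isd_const. apply isd_id.
    apply isd_plus; apply isd_mult; auto.
    apply isd_mult. apply isd_mult. apply isd_const. apply DZ.
    apply isd_plus; apply isd_mult; auto. simpl; ring. }
  assert (HM0 : 0 <= M) by (destruct (HM x1 Hx1); pose proof (Rabs_pos (Re (f0 x1))); lra).
  assert (sq : forall a, Rabs a <= M -> a * a <= M^2).
  { intros a Ha. unfold Rabs in Ha; destruct Rcase_abs; nra. }
  assert (Hvb : forall t, 0 < t < 1 -> v t <= 2*M^2 * (t*(1-t))).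
  { intros t Ht. destruct (HM t Ht) as [B1 B2]. unfold v, p, q.
    pose proof (sq _ B1). pose proof (sq _ B2).
    assert (0 < t*(1-t)) by nra. nra. }
  set (V1 := v x1).
  assert (HV1 : 0 < V1).
  { unfold V1, v, p, q. assert (0 < x1*(1-x1)) by nra.
    assert (0 < Re (f0 x1) * Re (f0 x1) + Im (f0 x1) * Im (f0 x1)) by nra. nra. }
  set (k := 2*M^2+1).
  assert (Hk : 0 < k) by (unfold k; nra).
  set (del := Rmin (Rmin x1 (1-x1)) (V1/(4*k)) / 2).
  assert (Hm1 : 0 < Rmin (Rmin x1 (1-x1)) (V1/(4*k))).
  { apply Rmin_glb_lt. apply Rmin_glb_lt; lra. apply Rdiv_lt_0_compat; lra. }
  pose proof (Rmin_l (Rmin x1 (1-x1)) (V1/(4*k))).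
  pose proof (Rmin_r (Rmin x1 (1-x1)) (V1/(4*k))).
  pose proof (Rmin_l x1 (1-x1)). pose proof (Rmin_r x1 (1-x1)).
  assert (Hdel0 : 0 < del) by (unfold del; lra).
  assert (Hdel1 : del < x1) by (unfold del; lra).
  assert (Hdel2 : del < 1 - x1) by (unfold del; lra).
  assert (Hdel3 : 2*M^2*del < V1).
  { assert (del <= V1/(4*k)) by (unfold del; lra).
    assert (V1/(4*k)*(4*k) = V1) by (field; lra).
    assert (del * (4*k) <= V1/(4*k)*(4*k)) by (apply Rmult_le_compat_r; lra).
    unfold k in *. nra. }
  assert (Hout : forall t, 0 < t < 1 -> (t < del \/ 1 - del < t) -> v t < V1).
  { intros t Ht Hor. pose proof (Hvb t Ht).
    assert (t*(1-t) <= del) by (destruct Hor; nra). nra. }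
  assert (Hcont : forall c, del <= c <= 1 - del -> continuity_pt v c).
  { intros c Hc. apply derivable_continuous_pt. exists (v1 c).
    apply is_derive_Reals. apply Dv. lra. }
  destruct (continuity_ab_maj v del (1 - del) ltac:(lra) Hcont) as [c [Hc1 Hc2]].
  assert (Hmax : forall t, 0 < t < 1 -> v t <= v c).
  { intros t Ht. destruct (Rlt_dec t del) as [Ha|Ha].
    - pose proof (Hout t Ht (or_introl Ha)). pose proof (Hc1 x1 ltac:(lra)). unfold V1 in *. lra.
    - destruct (Rlt_dec (1 - del) t) as [Hb|Hb].
      + pose proof (Hout t Ht (or_intror Hb)). pose proof (Hc1 x1 ltac:(lra)). unfold V1 in *. lra.
      + apply Hc1; lra. }
  assert (Hc : 0 < c < 1) by lra.
  destruct (maxprinc v v1 v2 0 1 c Hc Dv Dv1 Hmax) as [E1 E2].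
  pose proof (Hc1 x1 ltac:(lra)) as Hvc.
  destruct (odeq_parts _ _ _ _ _ _ (Ho c Hc)) as [O1 O2].
  apply (Rmult_eq_compat_l (p c)) in O1. apply (Rmult_eq_compat_l (q c)) in O2.
  unfold V1, v, v1, v2, p, q, p1, q1, p2, q2 in *.
  apply (final_ineq (Re mu) (Im mu) s c
    (Re (f0 c) * Re (f0 c) + Im (f0 c) * Im (f0 c))
    (Re (f0 c) * Re (f1 c) + Im (f0 c) * Im (f1 c))
    (Re (f0 c) * Im (f1 c) - Im (f0 c) * Re (f1 c))
    (Re (f1 c) * Re (f1 c) + Im (f1 c) * Im (f1 c))
    (Re (f0 c) * Re (f2 c) + Im (f0 c) * Im (f2 c))).
  all: cbv beta in *.
  - exact Hs.
  - exact Hmu.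
  - exact Hc.
  - assert (0 < c*(1-c)) by nra. nra.
  - exact E1.
  - exact E2.
  - ring.
  - lra.
Qed.

Lemma core s lam (D : nat -> R -> C) N :
  0 <= s <= 1 -> -1 < Re lam -> lam <> RtoC 0 -> lam <> RtoC 1 ->
  (Im lam)^2 + 3 <= Re lam + INR N ->
  (forall k, (k < N + 2)%nat -> forall x, 0 < x < 1 -> cderiv (D k) x (D (S k) x)) ->
  (exists M, forall x, 0 < x < 1 -> Rabs (Re (D N x)) <= M /\ Rabs (Im (D N x)) <= M) ->
  (forall x, 0 < x < 1 -> odeq s lam x (D 0%nat x) (D 1%nat x) (D 2%nat x)) ->
  forall x, 0 < x < 1 -> D 0%nat x = RtoC 0.
Proof.
  intros Hs Hl0 Hl1 Hl2 HN Hd HM Ho.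
  assert (Hode : forall k, (k <= N)%nat -> forall x, 0 < x < 1 ->
            odeq s (lam + RtoC (INR k)) x (D k x) (D (S k) x) (D (S (S k)) x)).
  { induction k as [|k IH]; intros Hk x Hx.
    - simpl. replace (lam + RtoC 0)%C with lam by ring. apply Ho; auto.
    - replace (lam + RtoC (INR (S k)))%C with ((lam + RtoC (INR k)) + RtoC 1)%C
        by (rewrite S_INR, RtoC_plus; ring).
      apply ode_step with (f0 := D k); auto.
      + intros t Ht. apply IH; auto. lia.
      + intros t Ht. apply Hd; auto. lia.
      + intros t Ht. apply Hd; auto. lia.
      + apply Hd; auto. lia. }
  assert (HzN : forall x, 0 < x < 1 -> D N x = RtoC 0).
  { apply (maxstep s (lam + RtoC (INR N)) (D N) (D (S N)) (D (S (S N)))).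
    - exact Hs.
    - unfold Re, Im in *. simpl. rewrite Rplus_0_r. exact HN.
    - intros x Hx. apply Hd; auto. lia.
    - intros x Hx. apply Hd; auto. lia.
    - exact HM.
    - intros x Hx. apply Hode; auto. }
  assert (Hdown : forall j, (j <= N)%nat -> forall x, 0 < x < 1 -> D (N - j)%nat x = RtoC 0).
  { induction j as [|j IH]; intros Hj x Hx.
    - replace (N - 0)%nat with N by lia. auto.
    - set (k := (N - S j)%nat).
      assert (Ek : S k = (N - j)%nat) by (unfold k; lia).
      assert (Z1 : forall t, 0 < t < 1 -> D (S k) t = RtoC 0) by (intros; rewrite Ek; apply IH; auto; lia).
      assert (Z2 : D (S (S k)) x = RtoC 0).
      { apply (cderiv_zero_loc 0 1 (D (S k)) x); auto. apply Hd; auto. unfold k; lia. }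
      assert (O := Hode k ltac:(unfold k; lia) x Hx).
      unfold odeq in O. rewrite Z2, (Z1 x Hx) in O.
      set (mu := (lam + RtoC (INR k))%C) in O.
      assert (Hne1 : mu <> RtoC 0).
      { intros E. unfold mu in E. destruct k as [|k'].
        - apply Hl1. rewrite <- E. simpl. ring.
        - rewrite S_INR in E. apply (f_equal Re) in E. unfold Re in E. simpl in E.
          pose proof (pos_INR k'). unfold Re in Hl0. lra. }
      assert (Hne2 : (mu - RtoC 1)%C <> RtoC 0).
      { intros E. unfold mu in E. destruct k as [|[|k']].
        - apply Hl2. pose proof (f_equal Re E) as E1; pose proof (f_equal Im E) as E2.
          apply C_ext; unfold Re, Im in *; simpl in *; lra.
        - apply Hl1. pose proof (f_equal Re E) as E1; pose proof (f_equal Im E) as E2.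
          apply C_ext; unfold Re, Im in *; simpl in *; lra.
        - rewrite !S_INR in E. apply (f_equal Re) in E. unfold Re in E. simpl in E.
          pose proof (pos_INR k'). unfold Re in Hl0. lra. }
      assert (E : (mu * (mu - RtoC 1) * D k x)%C = RtoC 0).
      { match type of O with ?L = _ => assert (E0 : (mu * (mu - RtoC 1) * D k x)%C = (- L)%C) by ring end.
        rewrite E0, O. ring. }
      replace (D k x) with (/ (mu * (mu - RtoC 1)) * (mu * (mu - RtoC 1) * D k x))%C
        by (field; split; auto).
      rewrite E. ring. }
  intros x Hx. replace 0%nat with (N - N)%nat by lia. apply Hdown; auto.
Qed.

Lemma smooth_chain a b (D : nat -> R -> C) :
  (forall n, has_deriv_on a b (D n) (D (S n))) ->
  forall k x, a < x < b -> cderiv (D k) x (D (S k) x).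
Proof. intros H k x Hx. apply (cd_interior a b); auto. Qed.

Lemma part1_gen (s : R) (lam : C) (psi d1 d2 : R -> C) :
  0 <= s <= 1 -> (Re lam > -1)%R -> lam <> RtoC 0 -> lam <> RtoC 1 ->
  smooth_on 0 1 psi -> has_deriv_on 0 1 psi d1 -> has_deriv_on 0 1 d1 d2 ->
  (forall z : R, (0 <= z <= 1)%R ->
     (RtoC z * (RtoC 1 - RtoC z) * d2 z
      + (lam - RtoC s - RtoC 2 * lam * RtoC z) * d1 z
      - lam * (lam - RtoC 1) * psi z)%C = RtoC 0) ->
  forall z, 0 <= z <= 1 -> psi z = RtoC 0.
Proof.
  intros Hs Hl0 Hl1 Hl2 [D [HD0 HDs]] Hd1 Hd2 Hode.
  destruct (nat_large ((Im lam)^2 + 3 - Re lam)) as [N HN].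
  assert (Hc := smooth_chain 0 1 D HDs).
  assert (E1 : forall x, 0 < x < 1 -> D 1%nat x = d1 x).
  { intros x Hx. apply (cderiv_unique_loc 0 1 (D 0%nat) psi x); auto.
    intros; rewrite HD0; auto. apply (cd_interior 0 1); auto. }
  assert (E2 : forall x, 0 < x < 1 -> D 2%nat x = d2 x).
  { intros x Hx. apply (cderiv_unique_loc 0 1 (D 1%nat) d1 x); auto.
    apply (cd_interior 0 1); auto. }
  assert (Hz : forall x, 0 < x < 1 -> D 0%nat x = RtoC 0).
  { apply (core s lam D N Hs Hl0 Hl1 Hl2).
    - lra.
    - intros k _ x Hx. apply Hc; auto.
    - destruct (hd_bounded 0 1 (D N) (D (S N)) ltac:(lra) (HDs N)) as [M HM].
      exists M. intros x Hx. apply HM. lra.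
    - intros x Hx. unfold odeq. rewrite E1, E2, HD0 by auto.
      rewrite <- (Hode x ltac:(lra)).
      rewrite RtoC_mult, !RtoC_minus, RtoC_mult. ring. }
  apply (hd_zero_closed 0 1 psi d1); auto. lra.
  intros t Ht. rewrite <- HD0. auto.
Qed.

Definition cbnd a b (f : R -> C) := exists M, forall x, a < x < b -> Rabs (Re (f x)) <= M /\ Rabs (Im (f x)) <= M.

Fixpoint Ch a b (n : nat) (f : R -> C) : Prop :=
  cbnd a b f /\ match n with O => True | S m => exists g, (forall x, a < x < b -> cderiv f x (g x)) /\ Ch a b m g end.

Lemma Ch_S a b n f : Ch a b (S n) f -> Ch a b n f.
Proof.
  revert f. induction n as [|n IH]; intros f [Hb [g [Hg Hc]]].
  - split; auto.
  - split; auto. exists g. split; auto.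
Qed.

Lemma cderiv_ext_loc a b (f g : R -> C) x l : (forall t, a < t < b -> f t = g t) -> a < x < b ->
  cderiv f x l -> cderiv g x l.
Proof.
  intros E Hx [H1 H2].
  assert (HL : locally x (fun t => f t = g t)).
  { apply filter_imp with (2 := locally_int a b x Hx). auto. }
  split.
  - apply (is_derive_ext_loc (fun t => Re (f t))); auto.
    apply filter_imp with (2 := HL). intros t ->; reflexivity.
  - apply (is_derive_ext_loc (fun t => Im (f t))); auto.
    apply filter_imp with (2 := HL). intros t ->; reflexivity.
Qed.

Lemma Ch_ext a b n (f g : R -> C) : (forall t, a < t < b -> f t = g t) -> Ch a b n f -> Ch a b n g.
Proof.
  intros E. destruct n as [|n]; intros [[M HM] Hr]; split.
  - exists M. intros x Hx. rewrite <- E; auto.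
  - auto.
  - exists M. intros x Hx. rewrite <- E; auto.
  - destruct Hr as [h [Hh Hc]]. exists h. split; auto.
    intros x Hx. apply (cderiv_ext_loc a b f); auto.
Qed.

Lemma cbnd_plus a b f g : cbnd a b f -> cbnd a b g -> cbnd a b (fun t => (f t + g t)%C).
Proof.
  intros [M1 H1] [M2 H2]. exists (M1 + M2). intros x Hx.
  destruct (H1 x Hx), (H2 x Hx). unfold Re, Im in *. simpl. split.
  - eapply Rle_trans. apply Rabs_triang. lra.
  - eapply Rle_trans. apply Rabs_triang. lra.
Qed.

Lemma cbnd_mult a b f g : cbnd a b f -> cbnd a b g -> cbnd a b (fun t => (f t * g t)%C).
Proof.
  intros [M1 H1] [M2 H2]. exists (2 * (M1 * M2)). intros x Hx.
  destruct (H1 x Hx) as [A1 A2], (H2 x Hx) as [B1 B2]. simpl.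
  assert (0 <= M1) by (pose proof (Rabs_pos (Re (f x))); lra).
  assert (0 <= M2) by (pose proof (Rabs_pos (Re (g x))); lra).
  pose proof (Rabs_pos (Re (f x))). pose proof (Rabs_pos (Im (f x))).
  pose proof (Rabs_pos (Re (g x))). pose proof (Rabs_pos (Im (g x))).
  unfold Re, Im in *. split.
  - eapply Rle_trans. unfold Rminus. apply Rabs_triang. rewrite Rabs_Ropp, !Rabs_mult.
    assert (Rabs (fst (f x)) * Rabs (fst (g x)) <= M1 * M2) by (apply Rmult_le_compat; auto).
    assert (Rabs (snd (f x)) * Rabs (snd (g x)) <= M1 * M2) by (apply Rmult_le_compat; auto).
    lra.
  - eapply Rle_trans. apply Rabs_triang. rewrite !Rabs_mult.
    assert (Rabs (fst (f x)) * Rabs (snd (g x)) <= M1 * M2) by (apply Rmult_le_compat; auto).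
    assert (Rabs (snd (f x)) * Rabs (fst (g x)) <= M1 * M2) by (apply Rmult_le_compat; auto).
    lra.
Qed.

Lemma Ch_plus a b n : forall f g, Ch a b n f -> Ch a b n g -> Ch a b n (fun t => (f t + g t)%C).
Proof.
  induction n as [|n IH]; intros f g [Hf Rf] [Hg Rg].
  - split; auto. apply cbnd_plus; auto.
  - split. apply cbnd_plus; auto.
    destruct Rf as [f' [Hf' Cf]], Rg as [g' [Hg' Cg]].
    exists (fun t => (f' t + g' t)%C). split.
    + intros x Hx. apply cderiv_plus; auto.
    + apply IH; auto.
Qed.

Lemma Ch_mult a b n : forall f g, Ch a b n f -> Ch a b n g -> Ch a b n (fun t => (f t * g t)%C).
Proof.
  induction n as [|n IH]; intros f g [Hf Rf] [Hg Rg].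
  - split; auto. apply cbnd_mult; auto.
  - split. apply cbnd_mult; auto.
    destruct Rf as [f' [Hf' Cf]], Rg as [g' [Hg' Cg]].
    exists (fun t => (f' t * g t + f t * g' t)%C). split.
    + intros x Hx. apply cderiv_mult; auto.
    + apply Ch_plus; apply IH; auto.
      * apply Ch_S. split; auto. exists g'. auto.
      * apply Ch_S. split; auto. exists f'. auto.
Qed.

Lemma cbnd_const a b (c : C) : cbnd a b (fun _ => c).
Proof. exists (Rmax (Rabs (Re c)) (Rabs (Im c))). intros. split; [apply Rmax_l | apply Rmax_r]. Qed.

Lemma Ch_const a b n : forall (c : C), Ch a b n (fun _ => c).
Proof.
  induction n as [|n IH]; intros c.
  - split; auto. apply cbnd_const.
  - split. apply cbnd_const. exists (fun _ => RtoC 0). split.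
    + intros. apply cderiv_const.
    + apply IH.
Qed.

Lemma Ch_comp a b c d n : forall (f : R -> C) (h : R -> R),
  (forall x, a < x < b -> c < h x < d) ->
  Ch a b n (fun t => RtoC (h t)) -> Ch c d n f -> Ch a b n (fun t => f (h t)).
Proof.
  induction n as [|n IH]; intros f h Hh Chh [[M HM] Rf].
  - split; auto. exists M. intros x Hx. apply HM. auto.
  - split. { exists M. intros x Hx. apply HM. auto. }
    destruct Rf as [f' [Hf' Cf]].
    destruct Chh as [Hbh [g [Hg Cg]]].
    assert (Eg : forall x, a < x < b -> g x = RtoC (Re (g x))).
    { intros x Hx. destruct (Hg x Hx) as [_ G2]. apply C_ext; simpl; auto.
      apply (isd_unique (fun t => Im (RtoC (h t))) x); auto.
      simpl. apply isd_const. }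
    exists (fun t => (RtoC (Re (g t)) * f' (h t))%C). split.
    + intros x Hx. apply cderiv_comp. apply Hf'. auto. exact (proj1 (Hg x Hx)).
    + apply Ch_mult.
      * apply (Ch_ext a b n g); auto.
      * apply IH; auto. apply Ch_S. split; auto. exists g. split; auto.
Qed.

Lemma Ch_extract a b n : forall f, Ch a b n f -> exists D : nat -> R -> C,
  D O = f /\ (forall k, (k < n)%nat -> forall x, a < x < b -> cderiv (D k) x (D (S k) x)) /\
  (forall k, (k <= n)%nat -> cbnd a b (D k)).
Proof.
  induction n as [|n IH]; intros f [Hb Rf].
  - exists (fun _ => f). split; auto. split. intros; lia. intros; auto.
  - destruct Rf as [g [Hg Cg]]. destruct (IH g Cg) as [D [D0 [Dd Db]]].
    exists (fun k => match k with O => f | S k' => D k' end). split; auto. split.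
    + intros [|k] Hk x Hx; simpl. rewrite D0; auto. apply Dd; auto. lia.
    + intros [|k] Hk; auto. apply Db. lia.
Qed.

Lemma smooth_Ch a b (D : nat -> R -> C) : a <= b ->
  (forall n, has_deriv_on a b (D n) (D (S n))) -> forall n k, Ch a b n (D k).
Proof.
  intros Hab H n.
  assert (Hb : forall k, cbnd a b (D k)).
  { intros k. destruct (hd_bounded a b (D k) (D (S k)) Hab (H k)) as [M HM].
    exists M. intros x Hx. apply HM. lra. }
  induction n as [|n IH]; intros k.
  - split; auto.
  - split. apply Hb. exists (D (S k)). split; auto.
    intros x Hx. apply (cd_interior a b); auto.
Qed.

Definition den (s t : R) := 1 + s - 2*s*t.
Definition hh (s t : R) := (2*t - 1 - s) / den s t.
Definition LL (s t : R) := ln (1 - s*s) - ln (den s t).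
Definition ww (s : R) (lam : C) (t : R) : C :=
  (exp (Re lam * LL s t) * cos (Im lam * LL s t), exp (Re lam * LL s t) * sin (Im lam * LL s t)).

Lemma den_bounds s t : 0 <= s < 1 -> 0 <= t <= 1 -> 1 - s <= den s t <= 1 + s.
Proof. intros. unfold den. nra. Qed.
Lemma den_pos s t : 0 <= s < 1 -> 0 <= t <= 1 -> 0 < den s t.
Proof. intros. pose proof (den_bounds s t H H0). lra. Qed.

Lemma hh_range s t : 0 <= s < 1 -> 0 < t < 1 -> -1 < hh s t < 1.
Proof.
  intros Hs Ht. pose proof (den_pos s t Hs ltac:(lra)) as Hd. unfold hh. split.
  - apply (Rmult_lt_reg_r (den s t)); auto. unfold Rdiv. rewrite Rmult_assoc, Rinv_l by lra.
    unfold den in *. nra.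
  - apply (Rmult_lt_reg_r (den s t)); auto. unfold Rdiv. rewrite Rmult_assoc, Rinv_l by lra.
    unfold den in *. nra.
Qed.

Lemma isd_fam s c k t : 0 <= s < 1 -> 0 < t < 1 ->
  is_derive (fun t => c / den s t ^ k) t (c * (2*s*INR k) / den s t ^ (S k)).
Proof.
  intros Hs Ht. pose proof (den_pos s t Hs ltac:(lra)) as Hd. unfold den in *.
  auto_derive.
  - apply pow_nonzero. lra.
  - set (X := 1 + s + - (2 * s * t)). replace (1 + s - 2 * s * t) with X by (unfold X; ring).
    assert (HX : X <> 0) by (unfold X; lra).
    destruct k as [|k].
    + simpl INR. simpl pow. field. auto.
    + replace (Init.Nat.pred (S k)) with k by reflexivity.
      repeat rewrite <- tech_pow_Rmult. rewrite S_INR.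
      field. split; auto. apply pow_nonzero; auto.
Qed.

Lemma ln_le' x y : 0 < x -> x <= y -> ln x <= ln y.
Proof. intros. destruct (Rle_lt_or_eq_dec x y H0). left; apply ln_increasing; auto. subst; lra. Qed.
Lemma exp_le' x y : x <= y -> exp x <= exp y.
Proof. intros. destruct (Rle_lt_or_eq_dec x y H). left; apply exp_increasing; auto. subst; lra. Qed.

Lemma cbnd_fam s c k : 0 <= s < 1 -> cbnd 0 1 (fun t => RtoC (c / den s t ^ k)).
Proof.
  intros Hs. exists (Rabs c * / (1 - s) ^ k). intros x Hx.
  pose proof (den_bounds s x Hs ltac:(lra)) as Hd.
  assert (H1 : 0 < (1 - s) ^ k) by (apply pow_lt; lra).
  assert (H2 : (1 - s) ^ k <= den s x ^ k) by (apply pow_incr; lra).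
  simpl. split.
  - unfold Rdiv. rewrite Rabs_mult, Rabs_inv, (Rabs_pos_eq (den s x ^ k)) by lra.
    apply Rmult_le_compat_l. apply Rabs_pos. apply Rinv_le_contravar; lra.
  - rewrite Rabs_R0. apply Rmult_le_pos. apply Rabs_pos. left. apply Rinv_0_lt_compat; lra.
Qed.

Lemma Ch_fam s n : 0 <= s < 1 -> forall k c, Ch 0 1 n (fun t => RtoC (c / den s t ^ k)).
Proof.
  intros Hs. induction n as [|n IH]; intros k c.
  - split; auto. apply cbnd_fam; auto.
  - split. apply cbnd_fam; auto.
    exists (fun t => RtoC (c * (2*s*INR k) / den s t ^ (S k))). split.
    + intros x Hx. apply cderiv_R. apply isd_fam; auto.
    + apply IH.
Qed.

Lemma isd_hh s t : 0 <= s < 1 -> 0 < t < 1 ->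
  is_derive (hh s) t (2*(1-s*s) / den s t ^ 2).
Proof.
  intros Hs Ht. pose proof (den_pos s t Hs ltac:(lra)) as Hd. unfold hh, den in *.
  auto_derive. lra. field. lra.
Qed.

Lemma Ch_hh s n : 0 <= s < 1 -> Ch 0 1 n (fun t => RtoC (hh s t)).
Proof.
  intros Hs. destruct n as [|n].
  - split; auto. exists 1. intros x Hx. pose proof (hh_range s x Hs Hx). simpl.
    rewrite Rabs_R0. split; [unfold Rabs; destruct Rcase_abs; lra | lra].
  - split.
    + exists 1. intros x Hx. pose proof (hh_range s x Hs Hx). simpl.
      rewrite Rabs_R0. split; [unfold Rabs; destruct Rcase_abs; lra | lra].
    + exists (fun t => RtoC (2*(1-s*s) / den s t ^ 2)). split.
      * intros x Hx. apply cderiv_R. apply isd_hh; auto.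
      * apply Ch_fam; auto.
Qed.

Lemma cderiv_ww s lam t : 0 <= s < 1 -> 0 < t < 1 ->
  cderiv (ww s lam) t (RtoC (2*s / den s t ^ 1) * lam * ww s lam t)%C.
Proof.
  intros Hs Ht. pose proof (den_pos s t Hs ltac:(lra)) as Hd.
  destruct lam as [m tau]. unfold cderiv, ww, LL, Re, Im. simpl.
  unfold den in *. split.
  - auto_derive. lra. unfold Rminus. field. lra.
  - auto_derive. lra. unfold Rminus. field. lra.
Qed.

Lemma cbnd_ww s lam : 0 <= s < 1 -> cbnd 0 1 (ww s lam).
Proof.
  intros Hs. set (K := Rabs (ln (1 - s*s)) + Rabs (ln (1 - s)) + Rabs (ln (1 + s))).
  exists (exp (Rabs (Re lam) * K)). intros x Hx.
  pose proof (den_bounds s x Hs ltac:(lra)) as Hd.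
  assert (HL : Rabs (LL s x) <= K).
  { unfold LL, K.
    assert (A1 : ln (1 - s) <= ln (den s x)) by (apply ln_le'; lra).
    assert (A2 : ln (den s x) <= ln (1 + s)) by (apply ln_le'; lra).
    pose proof (Rabs_pos (ln (1 - s*s))). pose proof (Rabs_pos (ln (1 - s))).
    pose proof (Rabs_pos (ln (1 + s))).
    pose proof (Rle_abs (ln (1 - s))). pose proof (Rle_abs (ln (1 + s))).
    pose proof (Rabs_Ropp (ln (1 - s))). pose proof (Rle_abs (- ln (1 - s))).
    pose proof (Rle_abs (ln (1 - s*s))). pose proof (Rle_abs (- ln (1 - s*s))).
    rewrite Rabs_Ropp in *.
    unfold Rabs at 1; destruct Rcase_abs; lra. }
  assert (HE : exp (Re lam * LL s x) <= exp (Rabs (Re lam) * K)).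
  { apply exp_le'. eapply Rle_trans. apply Rle_abs. rewrite Rabs_mult.
    apply Rmult_le_compat_l. apply Rabs_pos. auto. }
  pose proof (exp_pos (Re lam * LL s x)).
  pose proof (COS_bound (Im lam * LL s x)). pose proof (SIN_bound (Im lam * LL s x)).
  unfold ww. simpl. rewrite !Rabs_mult, (Rabs_pos_eq (exp _)) by lra. split.
  - assert (Rabs (cos (Im lam * LL s x)) <= 1) by (unfold Rabs; destruct Rcase_abs; lra).
    assert (exp (Re lam * LL s x) * Rabs (cos (Im lam * LL s x)) <= exp (Re lam * LL s x) * 1)
      by (apply Rmult_le_compat_l; lra). lra.
  - assert (Rabs (sin (Im lam * LL s x)) <= 1) by (unfold Rabs; destruct Rcase_abs; lra).
    assert (exp (Re lam * LL s x) * Rabs (sin (Im lam * LL s x)) <= exp (Re lam * LL s x) * 1)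
      by (apply Rmult_le_compat_l; lra). lra.
Qed.

Lemma Ch_ww s lam n : 0 <= s < 1 -> Ch 0 1 n (ww s lam).
Proof.
  intros Hs. induction n as [|n IH].
  - split; auto. apply cbnd_ww; auto.
  - split. apply cbnd_ww; auto.
    exists (fun t => (RtoC (2*s / den s t ^ 1) * lam * ww s lam t)%C). split.
    + intros x Hx. apply cderiv_ww; auto.
    + apply (Ch_mult 0 1 n (fun t => (RtoC (2*s / den s t ^ 1) * lam)%C) (ww s lam)); auto.
      apply (Ch_mult 0 1 n (fun t => RtoC (2*s / den s t ^ 1)) (fun _ => lam)).
      apply Ch_fam; auto. apply Ch_const.
Qed.

Lemma ww_nz s lam t : ww s lam t <> RtoC 0.
Proof.
  destruct lam as [m tau].
  intros E. pose proof (f_equal Re E) as E1. pose proof (f_equal Im E) as E2.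
  unfold ww, Re, Im in E1, E2. simpl in E1, E2.
  pose proof (exp_pos (m * LL s t)) as P1.
  pose proof (sin2_cos2 (tau * LL s t)) as P2. unfold Rsqr in *.
  apply Rmult_integral in E1. apply Rmult_integral in E2.
  destruct E1 as [E1|E1]; [lra|]. destruct E2 as [E2|E2]; [lra|].
  rewrite E1, E2 in P2. lra.
Qed.

Lemma RtoC_nz r : r <> 0 -> RtoC r <> RtoC 0.
Proof. intros H E. apply H. apply (f_equal Re) in E. exact E. Qed.


Lemma c_den s x : RtoC (den s x) = (RtoC 1 + RtoC s - RtoC 2 * RtoC s * RtoC x)%C.
Proof. unfold den. rewrite RtoC_minus, RtoC_plus, !RtoC_mult. reflexivity. Qed.
Lemma c_Lp s x : den s x <> 0 -> RtoC (2*s / den s x ^ 1) = (RtoC 2 * RtoC s / (RtoC 1 + RtoC s - RtoC 2 * RtoC s * RtoC x))%C.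
Proof. intros Hd. rewrite pow_1, RtoC_div by auto. rewrite RtoC_mult, c_den. reflexivity. Qed.
Lemma c_hp s x : den s x <> 0 -> RtoC (2*(1-s*s) / den s x ^ 2) = (RtoC 2 * (RtoC 1 - RtoC s*RtoC s) / ((RtoC 1 + RtoC s - RtoC 2 * RtoC s * RtoC x)*(RtoC 1 + RtoC s - RtoC 2 * RtoC s * RtoC x)))%C.
Proof.
  intros Hd. replace (den s x ^ 2) with (den s x * den s x) by ring.
  rewrite RtoC_div by (apply Rmult_integral_contrapositive; auto).
  rewrite !RtoC_mult, RtoC_minus, RtoC_mult, c_den. reflexivity.
Qed.
Lemma c_Lpp s x : den s x <> 0 -> RtoC (2*s*(2*s*INR 1) / den s x ^ 2) = (RtoC 4 * RtoC s * RtoC s / ((RtoC 1 + RtoC s - RtoC 2 * RtoC s * RtoC x)*(RtoC 1 + RtoC s - RtoC 2 * RtoC s * RtoC x)))%C.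
Proof.
  intros Hd. replace (den s x ^ 2) with (den s x * den s x) by ring.
  replace (2*s*(2*s*INR 1)) with (4*s*s) by (simpl; ring).
  rewrite RtoC_div by (apply Rmult_integral_contrapositive; auto).
  rewrite !RtoC_mult, c_den. reflexivity.
Qed.
Lemma c_hpp s x : den s x <> 0 -> RtoC (2*(1-s*s)*(2*s*INR 2) / den s x ^ 3) = (RtoC 8 * RtoC s * (RtoC 1 - RtoC s*RtoC s) / ((RtoC 1 + RtoC s - RtoC 2 * RtoC s * RtoC x)*(RtoC 1 + RtoC s - RtoC 2 * RtoC s * RtoC x)*(RtoC 1 + RtoC s - RtoC 2 * RtoC s * RtoC x)))%C.
Proof.
  intros Hd. replace (den s x ^ 3) with (den s x * den s x * den s x) by ring.
  replace (2*(1-s*s)*(2*s*INR 2)) with (8*s*(1-s*s)) by (simpl; ring).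
  rewrite RtoC_div by (repeat apply Rmult_integral_contrapositive; auto).
  rewrite !RtoC_mult, RtoC_minus, RtoC_mult, c_den. reflexivity.
Qed.
Lemma c_Z x : RtoC (x*(1-x)) = (RtoC x * (RtoC 1 - RtoC x))%C.
Proof. rewrite RtoC_mult, RtoC_minus. reflexivity. Qed.
Lemma c_t x : RtoC (1 - 2*x) = (RtoC 1 - RtoC 2 * RtoC x)%C.
Proof. rewrite RtoC_minus, RtoC_mult. reflexivity. Qed.
Lemma c_A s : RtoC (1 - s*s) = (RtoC 1 - RtoC s * RtoC s)%C.
Proof. rewrite RtoC_minus, RtoC_mult. reflexivity. Qed.
Lemma c_Y s x : den s x <> 0 -> RtoC (hh s x) = ((RtoC 2 * RtoC x - RtoC 1 - RtoC s) / (RtoC 1 + RtoC s - RtoC 2 * RtoC s * RtoC x))%C.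
Proof. intros Hd. unfold hh. rewrite RtoC_div by auto. rewrite !RtoC_minus, RtoC_mult, c_den. reflexivity. Qed.
Lemma c_U s x : den s x <> 0 -> RtoC (1 + s * hh s x) = (RtoC 1 + RtoC s * ((RtoC 2 * RtoC x - RtoC 1 - RtoC s) / (RtoC 1 + RtoC s - RtoC 2 * RtoC s * RtoC x)))%C.
Proof. intros Hd. rewrite RtoC_plus, RtoC_mult, c_Y by auto. reflexivity. Qed.

Lemma part2_gen (s : R) (lam : C) (phi d1 d2 : R -> C) :
  0 <= s < 1 -> -1 < Re lam -> lam <> RtoC 0 -> lam <> RtoC 1 ->
  smooth_on (-1) 1 phi -> has_deriv_on (-1) 1 phi d1 -> has_deriv_on (-1) 1 d1 d2 ->
  (forall y : R, (-1 <= y <= 1)%R ->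
     ((lam * lam + lam
       - RtoC 2 * RtoC (1 - s*s) * lam / RtoC (1 + s * y)) * phi y
      + (RtoC 2 * lam + RtoC 2
         - RtoC 2 * RtoC (1 - s*s) / RtoC (1 + s * y)) * RtoC y * d1 y
      + (RtoC y * RtoC y - RtoC 1) * d2 y)%C = RtoC 0) ->
  forall y, -1 <= y <= 1 -> phi y = RtoC 0.
Proof.
  intros Hs Hl0 Hl1 Hl2 [D [HD0 HDs]] Hd1 Hd2 Hode.
  assert (CD := smooth_Ch (-1) 1 D ltac:(lra) HDs).
  assert (E1 : forall y, -1 < y < 1 -> D 1%nat y = d1 y).
  { intros y Hy. apply (cderiv_unique_loc (-1) 1 (D 0%nat) phi y); auto.
    intros; rewrite HD0; auto. apply (cd_interior (-1) 1); auto. apply (cd_interior (-1) 1); auto. }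
  assert (E2 : forall y, -1 < y < 1 -> D 2%nat y = d2 y).
  { intros y Hy. apply (cderiv_unique_loc (-1) 1 (D 1%nat) d1 y); auto.
    apply (cd_interior (-1) 1); auto. apply (cd_interior (-1) 1); auto. }
  assert (dD : forall k y, -1 < y < 1 -> cderiv (D k) y (D (S k) y)).
  { intros k y Hy. apply (cd_interior (-1) 1); auto. }
  set (w := ww s lam).
  set (psi := fun t => (w t * D 0%nat (hh s t))%C).
  set (psi1 := fun t => ((RtoC (2*s/den s t ^ 1) * lam * w t) * D 0%nat (hh s t)
                         + w t * (RtoC (2*(1-s*s)/den s t ^ 2) * D 1%nat (hh s t)))%C).
  assert (Dpsi : forall x, 0 < x < 1 -> cderiv psi x (psi1 x)).
  { intros x Hx. unfold psi, psi1. eapply cderiv_eq. apply cderiv_mult. apply cderiv_ww; auto. apply (cderiv_comp (D 0%nat) (hh s)).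
    apply dD. apply hh_range; auto. apply isd_hh; auto. reflexivity. }
  assert (Cpsi : forall n, Ch 0 1 n psi).
  { intros n. apply (Ch_mult 0 1 n w (fun t => D 0%nat (hh s t))). apply Ch_ww; auto.
    apply (Ch_comp 0 1 (-1) 1). intros; apply hh_range; auto. apply Ch_hh; auto. apply CD. }
  destruct (nat_large ((Im lam)^2 + 3 - Re lam)) as [N HN].
  destruct (Ch_extract 0 1 (N + 2) psi (Cpsi _)) as [D' [D'0 [D'd D'b]]].
  assert (Hz : forall x, 0 < x < 1 -> D' 0%nat x = RtoC 0).
  { apply (core s lam D' N); auto.
    - lra.
    - lra.
    - apply D'b. lia.
    - intros x Hx.
      assert (Hden : den s x <> 0) by (pose proof (den_pos s x Hs ltac:(lra)); lra).
      pose proof (hh_range s x Hs Hx) as Hh.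
      pose proof (cderiv_mult _ _ x _ _ (cderiv_mult _ _ x _ _ (cderiv_R _ x _ (isd_fam s (2*s) 1 x Hs Hx)) (cderiv_const lam x)) (cderiv_ww s lam x Hs Hx)) as T1.
      pose proof (cderiv_comp (D 0%nat) (hh s) x _ _ (dD 0%nat (hh s x) Hh) (isd_hh s x Hs Hx)) as T2.
      pose proof (cderiv_mult _ _ x _ _ T1 T2) as T3.
      pose proof (cderiv_comp (D 1%nat) (hh s) x _ _ (dD 1%nat (hh s x) Hh) (isd_hh s x Hs Hx)) as T4.
      pose proof (cderiv_mult _ _ x _ _ (cderiv_R _ x _ (isd_fam s (2*(1-s*s)) 2 x Hs Hx)) T4) as T5.
      pose proof (cderiv_mult _ _ x _ _ (cderiv_ww s lam x Hs Hx) T5) as T6.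
      pose proof (cderiv_plus _ _ x _ _ T3 T6) as T.
      cbv beta in T. clear T1 T2 T3 T4 T5 T6.
      assert (ED1 : forall t, 0 < t < 1 -> D' 1%nat t = psi1 t).
      { intros t Ht. apply (cderiv_unique_loc 0 1 (D' 0%nat) psi t); auto.
        intros; rewrite D'0; auto. apply D'd; auto. lia. }
      match type of T with cderiv _ _ ?E => assert (ED2 : D' 2%nat x = E) end.
      { apply (cderiv_unique_loc 0 1 (D' 1%nat) _ x _ _ ED1 Hx). apply D'd; auto. lia. exact T. }
      rewrite ED2, (ED1 x Hx), D'0. unfold psi, psi1. clear T ED2 ED1.
      pose proof (Hode (hh s x) ltac:(lra)) as H2.
      rewrite <- HD0, <- (E1 _ Hh), <- (E2 _ Hh) in H2.
      assert (nzD : (RtoC 1 + RtoC s - RtoC 2 * RtoC s * RtoC x)%C <> RtoC 0).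
      { rewrite <- (c_den s x). apply RtoC_nz; auto. }
      assert (nzA : (RtoC 1 - RtoC s * RtoC s)%C <> RtoC 0).
      { rewrite <- c_A. apply RtoC_nz. nra. }
      assert (nzU : (RtoC 1 + RtoC s * ((RtoC 2 * RtoC x - RtoC 1 - RtoC s) / (RtoC 1 + RtoC s - RtoC 2 * RtoC s * RtoC x)))%C <> RtoC 0).
      { rewrite <- (c_U s x Hden). apply RtoC_nz.
        assert (s * hh s x > -1) by (destruct Hh; nra). lra. }
      unfold odeq, w in *.
      rewrite (c_U s x Hden), c_A, (c_Y s x Hden) in H2.
      rewrite c_Z, c_t, (c_Lp s x Hden), (c_hp s x Hden), (c_Lpp s x Hden), (c_hpp s x Hden).
      match type of H2 with ?L = _ =>
        transitivity (- ((RtoC 1 - RtoC s * RtoC s) / ((RtoC 1 + RtoC s - RtoC 2 * RtoC s * RtoC x) * (RtoC 1 + RtoC s - RtoC 2 * RtoC s * RtoC x))) * ww s lam x * L)%C end.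
      2: { rewrite H2. ring. }
      field. split; intro Eq; [apply nzD | apply nzA]; rewrite <- Eq; cbv beta; ring. }
  assert (Hphi : forall y, -1 < y < 1 -> D 0%nat y = RtoC 0).
  { intros y Hy. set (q := 1 + s*y). assert (Hq : 0 < q) by (unfold q; nra).
    set (yh := (y + s)/q). set (z := (yh + 1)/2).
    assert (Hyh : yh * q = y + s) by (unfold yh; field; lra).
    assert (A1 : (yh + 1) * q = (1 + y) * (1 + s)) by (rewrite Rmult_plus_distr_r, Hyh; unfold q; ring).
    assert (A2 : (1 - yh) * q = (1 - y) * (1 - s)) by (rewrite Rmult_minus_distr_r, Hyh; unfold q; ring).
    assert (B1 : 0 < yh + 1) by nra.
    assert (B2 : 0 < 1 - yh) by nra.
    assert (Hz01 : 0 < z < 1) by (unfold z; lra).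
    assert (Hdz : den s z <> 0) by (pose proof (den_pos s z Hs ltac:(lra)); lra).
    assert (Hhz : hh s z = y).
    { unfold hh. apply (Rmult_eq_reg_r (den s z)); [|auto].
      unfold Rdiv; rewrite Rmult_assoc, Rinv_l by auto; rewrite Rmult_1_r.
      unfold den, z. unfold q in Hyh. lra. }
    pose proof (Hz z Hz01) as P. rewrite D'0 in P. unfold psi in P. rewrite Hhz in P.
    replace (D 0%nat y) with (/ w z * (w z * D 0%nat y))%C by (field; apply ww_nz).
    rewrite P. ring. }
  intros y Hy. rewrite <- HD0. apply (hd_zero_closed (-1) 1 (D 0%nat) (D 1%nat)); auto; lra.
Qed.

Lemma C_dec (u v : C) : u = v \/ u <> v.
Proof.
  destruct (Req_dec (Re u) (Re v)) as [E1|N1].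
  - destruct (Req_dec (Im u) (Im v)) as [E2|N2].
    + left. apply C_ext; auto.
    + right. intros E. apply N2. rewrite E. reflexivity.
  - right. intros E. apply N1. rewrite E. reflexivity.
Qed.

Theorem proposition3p3 :
  (forall (alpha : R) (lam : C),
      (0 < alpha <= 1)%R -> (Re lam > -1)%R -> lam <> RtoC 0 -> lam <> RtoC 1 ->
      ~ (exists psi d1 d2 : R -> C,
            smooth_on 0 1 psi /\
            has_deriv_on 0 1 psi d1 /\ has_deriv_on 0 1 d1 d2 /\
            (exists z : R, (0 <= z <= 1)%R /\ psi z <> RtoC 0) /\
            forall z : R, (0 <= z <= 1)%R ->
              (RtoC z * (RtoC 1 - RtoC z) * d2 z
               + (lam - RtoC (sqrt (1 - alpha)) - RtoC 2 * lam * RtoC z) * d1 z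
               - lam * (lam - RtoC 1) * psi z)%C = RtoC 0))
  /\
  (forall (alpha : R) (lam : C),
      (0 < alpha <= 1)%R ->
      (exists phi d1 d2 : R -> C,
            smooth_on (-1) 1 phi /\
            has_deriv_on (-1) 1 phi d1 /\ has_deriv_on (-1) 1 d1 d2 /\
            (exists y : R, (-1 <= y <= 1)%R /\ phi y <> RtoC 0) /\
            forall y : R, (-1 <= y <= 1)%R ->
              ((lam * lam + lam
                - RtoC 2 * RtoC alpha * lam / RtoC (1 + sqrt (1 - alpha) * y)) * phi y
               + (RtoC 2 * lam + RtoC 2
                  - RtoC 2 * RtoC alpha / RtoC (1 + sqrt (1 - alpha) * y)) * RtoC y * d1 y
               + (RtoC y * RtoC y - RtoC 1) * d2 y)%C = RtoC 0) ->
      (Re lam < 0)%R \/ lam = RtoC 0 \/ lam = RtoC 1).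
Proof.
  split.
  - intros alpha lam Ha Hre H0 H1 [psi [d1 [d2 [Hsm [Hd1 [Hd2 [[z [Hz Hnz]] Hode]]]]]]].
    apply Hnz. apply (part1_gen (sqrt (1 - alpha)) lam psi d1 d2); auto.
    split. apply sqrt_pos. apply Rle_trans with (sqrt 1); [apply sqrt_le_1_alt; lra | rewrite sqrt_1; lra].
  - intros alpha lam Ha [phi [d1 [d2 [Hsm [Hd1 [Hd2 [[y [Hy Hnz]] Hode]]]]]]].
    destruct (Rlt_dec (Re lam) 0) as [Hn|Hn]; [left; exact Hn|].
    destruct (C_dec lam (RtoC 0)) as [E0|N0]; [right; left; exact E0|].
    destruct (C_dec lam (RtoC 1)) as [E1|N1]; [right; right; exact E1|].
    exfalso. apply Hnz. apply (part2_gen (sqrt (1 - alpha)) lam phi d1 d2); auto.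
    + split. apply sqrt_pos. apply Rlt_le_trans with (sqrt 1); [apply sqrt_lt_1_alt; lra | rewrite sqrt_1; lra].
    + lra.
    + intros t Ht.
      assert (E : 1 - sqrt (1 - alpha) * sqrt (1 - alpha) = alpha) by (rewrite sqrt_sqrt; lra).
      rewrite E. apply Hode; auto.
Qed.
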